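(* Let $\alpha,\beta,\gamma\in\mathbb{Z}_2^n$ and $a,b,c\in\mathbb{Z}_2$. Then (1) $\mathrm{cadp}_c(\alpha,\beta,\gamma)=\mathrm{cadp}_c(\beta,\alpha,\gamma)=\mathrm{cadp}_c(\alpha+2^{n-1},\beta+2^{n-1},\gamma)$; (2) $\mathrm{cadp}_c(\alpha,\beta,\gamma)=\mathrm{cadp}_c(-\alpha,\beta,\gamma)=\mathrm{cadp}_c(\alpha,-\beta,\gamma)$; (3) $\mathrm{cadp}_c(\alpha,\beta,\gamma)=\mathrm{cadp}_{c\oplus1}(\alpha,\beta,-\gamma)$ if $\gamma\neq0$; (4) $\mathrm{padp}_{a,b}(\alpha,\beta,\gamma)=\mathrm{padp}_{a,b}(\alpha,\beta,-\gamma)$; (5) $\mathrm{padp}_{a,b}(-\alpha,\beta,\gamma)=\mathrm{padp}_{a\oplus1,b}(\alpha,\beta,\gamma)$ if $\alpha\ne0$; (6) $\mathrm{padp}_{a,b}(\alpha,-\beta,\gamma)=\mathrm{padp}_{a,b\oplus1}(\alpha,\beta,\gamma)$ if $\beta\ne0$; (7) $\mathrm{padp}_{1,b}(0,\beta,\gamma)=\mathrm{padp}_{a,1}(\alpha,0,\gamma)=\mathrm{cadp}_1(\alpha,\beta,0)=0$.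
   Context: For $x\in\mathbb{Z}_2^n$, $x=(x_0,\dots,x_{n-1})$ is identified with the integer $\sum_i x_i2^{n-1-i}$ ($x_0$ most significant); $+$ and $-$ are modulo $2^n$. Indices $0,\dots,7$ are identified with $\mathbb{Z}_2^3$ via $(p_0,p_1,p_2)\leftrightarrow4p_0+2p_1+p_2$; $e_0,\dots,e_7$ are the standard basis row vectors of $\mathbb{Q}^8$. $A_0$ is $\frac14$ times the $8\times8$ matrix with rows $(4,0,0,1,0,1,1,0)$, $(0,0,0,1,0,1,0,0)$, $(0,0,0,1,0,0,1,0)$, $(0,0,0,1,0,0,0,0)$, $(0,0,0,0,0,1,1,0)$, $(0,0,0,0,0,1,0,0)$, $(0,0,0,0,0,0,1,0)$, $(0,\dots,0)$, and $(A_k)_{i,j}=(A_0)_{i\oplus k,j\oplus k}$. For $\alpha,\beta,\gamma\in\mathbb{Z}_2^n$ let $\omega_i=4\alpha_i+2\beta_i+\gamma_i$. With $L_0=(1,0,1,0,1,0,1,0)$, $L_1=(0,1,0,1,0,1,0,1)$, $L_{0,0}=(1,1,0,0,0,0,0,0)$, $L_{0,1}=(0,0,1,1,0,0,0,0)$, $L_{1,0}=(0,0,0,0,1,1,0,0)$, $L_{1,1}=(0,0,0,0,0,0,1,1)$, define $\mathrm{cadp}_c(\alpha,\beta,\gamma)=L_cA_{\omega_0}\cdots A_{\omega_{n-1}}e_0^T$ and $\mathrm{padp}_{a,b}(\alpha,\beta,\gamma)=L_{a,b}A_{\omega_0}\cdots A_{\omega_{n-1}}e_0^T$. *)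

(* Defs.v *)
From mathcomp Require Import all_boot all_order all_algebra.
Set Implicit Arguments. Unset Strict Implicit. Unset Printing Implicit Defensive.
Import Order.TTheory GRing.Theory Num.Theory.
Local Open Scope ring_scope.

(* Elements of Z_2^n are represented by their integer value x in 'I_(2^n),
   x = \sum_i x_i 2^(n-1-i); arithmetic is modulo 2^n. *)
Lemma pow2_gt0 (n : nat) : (0 < 2 ^ n)%N.
Proof. by rewrite expn_gt0. Qed.

Definition zmod (n k : nat) : 'I_(2 ^ n) := Ordinal (ltn_pmod k (pow2_gt0 n)).
Definition zadd (n : nat) (x y : 'I_(2 ^ n)) : 'I_(2 ^ n) := zmod n (x + y).
Definition zopp (n : nat) (x : 'I_(2 ^ n)) : 'I_(2 ^ n) := zmod n (2 ^ n - x).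
Definition zero (n : nat) : 'I_(2 ^ n) := zmod n 0.

Definition xbit (n : nat) (x : 'I_(2 ^ n)) (i : nat) : nat :=
  odd (x %/ 2 ^ (n.-1 - i)).

Definition A0rows : seq (seq nat) :=
  [:: [:: 4; 0; 0; 1; 0; 1; 1; 0];
      [:: 0; 0; 0; 1; 0; 1; 0; 0];
      [:: 0; 0; 0; 1; 0; 0; 1; 0];
      [:: 0; 0; 0; 1; 0; 0; 0; 0];
      [:: 0; 0; 0; 0; 0; 1; 1; 0];
      [:: 0; 0; 0; 0; 0; 1; 0; 0];
      [:: 0; 0; 0; 0; 0; 0; 1; 0];
      [:: 0; 0; 0; 0; 0; 0; 0; 0] ]%N.

Definition A0 : 'M[rat]_8 :=
  \matrix_(i < 8, j < 8) ((nth 0 (nth [::] A0rows i) j)%:R / 4).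

Definition xor8 (i k : 'I_8) : 'I_8 := inord (Nat.lxor i k).

Definition Amat (k : 'I_8) : 'M[rat]_8 :=
  \matrix_(i < 8, j < 8) A0 (xor8 i k) (xor8 j k).

Definition omega (n : nat) (al be ga : 'I_(2 ^ n)) (i : nat) : 'I_8 :=
  inord (4 * xbit al i + 2 * xbit be i + xbit ga i).

Definition Aprod (n : nat) (al be ga : 'I_(2 ^ n)) : 'M[rat]_8 :=
  \prod_(i < n) Amat (omega al be ga i).

Definition rowvec (s : seq nat) : 'rV[rat]_8 := \row_(j < 8) (nth 0 s j)%:R.

Definition Lc (c : bool) : 'rV[rat]_8 :=
  if c then rowvec [:: 0; 1; 0; 1; 0; 1; 0; 1]%N
  else rowvec [:: 1; 0; 1; 0; 1; 0; 1; 0]%N.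

Definition Lab (a b : bool) : 'rV[rat]_8 :=
  match a, b with
  | false, false => rowvec [:: 1; 1; 0; 0; 0; 0; 0; 0]%N
  | false, true  => rowvec [:: 0; 0; 1; 1; 0; 0; 0; 0]%N
  | true, false  => rowvec [:: 0; 0; 0; 0; 1; 1; 0; 0]%N
  | true, true   => rowvec [:: 0; 0; 0; 0; 0; 0; 1; 1]%N
  end.

Definition e0T : 'cV[rat]_8 := \col_(i < 8) (if i == 0 :> nat then 1 else 0).

Definition cadp (n : nat) (c : bool) (al be ga : 'I_(2 ^ n)) : rat :=
  (Lc c *m Aprod al be ga *m e0T) 0 0.

Definition padp (n : nat) (a b : bool) (al be ga : 'I_(2 ^ n)) : rat :=
  (Lab a b *m Aprod al be ga *m e0T) 0 0.

(* Main.v *)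
Require Import Defs.
From mathcomp Require Import all_boot all_order all_algebra.
Import GRing.Theory.
Local Open Scope ring_scope.

Definition i8 := iota 0 8.
Lemma in_i8 (i : 'I_8) : nat_of_ord i \in i8.
Proof. by rewrite mem_iota ltn_ord. Qed.
Lemma alln (P : pred nat) : all P i8 -> forall i : 'I_8, P i.
Proof. by move/allP => H i; apply: H; rewrite mem_iota ltn_ord. Qed.
Lemma alln2 (P : nat -> nat -> bool) :
  all (fun i => all (fun j => P i j) i8) i8 -> forall i j : 'I_8, P i j.
Proof.
move=> H i j.
by have /allP/(_ i (in_i8 i)) /allP/(_ j (in_i8 j)) := H.
Qed.
Lemma alln3 (P : nat -> nat -> nat -> bool) :
  all (fun k => all (fun i => all (fun j => P k i j) i8) i8) i8 -> forall k i j : 'I_8, P k i j.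
Proof.
move=> H k i j.
have T := in_i8.
by have /allP/(_ k (T k)) /allP/(_ i (T i)) /allP/(_ j (T j)) := H.
Qed.

Lemma v_inord m : (m < 8)%N -> nat_of_ord (inord m : 'I_8) = m.
Proof. exact: inordK. Qed.

Lemma lxor_lt (i k : 'I_8) : (Nat.lxor i k < 8)%N.
Proof. by move: i k; apply: (alln2 (fun i k => Nat.lxor i k < 8)%N); vm_compute. Qed.

Lemma xor8E (i k : 'I_8) : nat_of_ord (xor8 i k) = Nat.lxor i k.
Proof. by rewrite /xor8 v_inord // lxor_lt. Qed.

Definition a0n (k i j : nat) : nat := nth 0%N (nth [::] A0rows (Nat.lxor i k)) (Nat.lxor j k).
Lemma AmatE k i j : Amat k i j = (a0n k i j)%:R / 4.
Proof. by rewrite !mxE !xor8E. Qed.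

Definition px (m : nat) (i : 'I_8) : 'I_8 := xor8 i (inord m).
Lemma pxE m (i : 'I_8) : (m < 8)%N -> nat_of_ord (px m i) = Nat.lxor i m.
Proof. by move=> hm; rewrite /px xor8E v_inord. Qed.
Definition hb (m : nat) (i : 'I_8) : bool := odd (i %/ m).
Definition sgn (i : nat) : nat := 4 * odd (i %/ 2) + 2 * odd (i %/ 4) + odd i.
Definition sg (i : 'I_8) : 'I_8 := inord (sgn i).
Lemma sgE (i : 'I_8) : nat_of_ord (sg i) = sgn i.
Proof. by rewrite v_inord // /sgn; case: (odd _); case: (odd _); case: (odd _). Qed.

Lemma perm_from (p : 'I_8 -> 'I_8) (pn : nat -> nat) :
  (forall i, nat_of_ord (p i) = pn i) ->
  all (fun k => all (fun i => all (fun j => a0n (pn k) i j == a0n k (pn i) (pn j)) i8) i8) i8 ->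
  forall k i j, Amat (p k) i j = Amat k (p i) (p j).
Proof.
move=> hp H k i j; rewrite !AmatE !hp.
by have /eqP -> := alln3 (fun k i j => a0n (pn k) i j == a0n k (pn i) (pn j)) H k i j.
Qed.

Lemma perm4 : forall k i j, Amat (px 4 k) i j = Amat k (px 4 i) (px 4 j).
Proof. apply: (@perm_from _ (fun i => Nat.lxor i 4)) => [i|]; [exact: pxE | by vm_compute]. Qed.
Lemma perm2 : forall k i j, Amat (px 2 k) i j = Amat k (px 2 i) (px 2 j).
Proof. apply: (@perm_from _ (fun i => Nat.lxor i 2)) => [i|]; [exact: pxE | by vm_compute]. Qed.
Lemma perm1 : forall k i j, Amat (px 1 k) i j = Amat k (px 1 i) (px 1 j).
Proof. apply: (@perm_from _ (fun i => Nat.lxor i 1)) => [i|]; [exact: pxE | by vm_compute]. Qed.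
Lemma permsg : forall k i j, Amat (sg k) i j = Amat k (sg i) (sg j).
Proof. apply: (@perm_from _ (sgn)) => [i|]; [exact: sgE | by vm_compute]. Qed.

Lemma inv_from (p : 'I_8 -> 'I_8) (pn : nat -> nat) :
  (forall i, nat_of_ord (p i) = pn i) -> (forall i : 'I_8, (pn i < 8)%N) ->
  all (fun i => pn (pn i) == i) i8 -> involutive p.
Proof.
move=> hp hb8 H i; apply: val_inj => /=.
rewrite !hp; exact/eqP/(alln (fun i => pn (pn i) == i) H).
Qed.
Lemma inv4 : involutive (px 4).
Proof. apply: (@inv_from _ (fun i => Nat.lxor i 4)) => [i|i|]; [exact: pxE | | by vm_compute].
by rewrite -pxE // ltn_ord. Qed.
Lemma inv2 : involutive (px 2).
Proof. apply: (@inv_from _ (fun i => Nat.lxor i 2)) => [i|i|]; [exact: pxE | | by vm_compute].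
by rewrite -pxE // ltn_ord. Qed.
Lemma inv1 : involutive (px 1).
Proof. apply: (@inv_from _ (fun i => Nat.lxor i 1)) => [i|i|]; [exact: pxE | | by vm_compute].
by rewrite -pxE // ltn_ord. Qed.
Lemma invsg : involutive sg.
Proof. apply: (@inv_from _ (sgn)) => [i|i|]; [exact: sgE | | by vm_compute].
by rewrite -sgE ltn_ord. Qed.

Definition hbn (m i : nat) : bool := odd (i %/ m).

Lemma clos_from m :
  all (fun k => all (fun i => all (fun l =>
     ~~ hbn m k ==> hbn m i ==> ~~ hbn m l ==> (a0n k i l == 0%N)) i8) i8) i8 ->
  forall k i l : 'I_8, ~~ hb m k -> hb m i -> ~~ hb m l -> Amat k i l = 0.
Proof.
move=> H k i l h1 h2 h3; rewrite AmatE.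
have := alln3 (fun k i l => ~~ hbn m k ==> hbn m i ==> ~~ hbn m l ==> (a0n k i l == 0%N)) H k i l.
by rewrite /hb in h1 h2 h3; rewrite /hbn h1 h2 h3 /= => /eqP ->; rewrite mul0r.
Qed.

Lemma sym_from m : (m < 8)%N ->
  all (fun k => all (fun i => all (fun l =>
     hbn m k ==> ~~ hbn m l ==> (a0n k (Nat.lxor i m) l == a0n k i l)) i8) i8) i8 ->
  forall k i l : 'I_8, hb m k -> ~~ hb m l -> Amat k (px m i) l = Amat k i l.
Proof.
move=> hm H k i l h1 h3; rewrite !AmatE pxE //.
have := alln3 (fun k i l => hbn m k ==> ~~ hbn m l ==> (a0n k (Nat.lxor i m) l == a0n k i l)) H k i l.
by rewrite /hb in h1 h3; rewrite /hbn h1 h3 /= => /eqP ->.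
Qed.

Lemma clos4 : forall k i l : 'I_8, ~~ hb 4 k -> hb 4 i -> ~~ hb 4 l -> Amat k i l = 0.
Proof. apply: clos_from; by vm_compute. Qed.
Lemma clos2 : forall k i l : 'I_8, ~~ hb 2 k -> hb 2 i -> ~~ hb 2 l -> Amat k i l = 0.
Proof. apply: clos_from; by vm_compute. Qed.
Lemma clos1 : forall k i l : 'I_8, ~~ hb 1 k -> hb 1 i -> ~~ hb 1 l -> Amat k i l = 0.
Proof. apply: clos_from; by vm_compute. Qed.
Lemma sym4 : forall k i l : 'I_8, hb 4 k -> ~~ hb 4 l -> Amat k (px 4 i) l = Amat k i l.
Proof. apply: sym_from; [done | by vm_compute]. Qed.
Lemma sym2 : forall k i l : 'I_8, hb 2 k -> ~~ hb 2 l -> Amat k (px 2 i) l = Amat k i l.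
Proof. apply: sym_from; [done | by vm_compute]. Qed.
Lemma sym1 : forall k i l : 'I_8, hb 1 k -> ~~ hb 1 l -> Amat k (px 1 i) l = Amat k i l.
Proof. apply: sym_from; [done | by vm_compute]. Qed.

Definition lett (x y z : bool) : 'I_8 := inord (4 * x + 2 * y + z).
Lemma lettE x y z : nat_of_ord (lett x y z) = (4 * x + 2 * y + z)%N.
Proof. by rewrite v_inord //; case: x; case: y; case: z. Qed.

Lemma lett4 x y z : lett (~~ x) y z = px 4 (lett x y z).
Proof. by apply: val_inj; rewrite /= lettE pxE // lettE; case: x; case: y; case: z. Qed.
Lemma lett2 x y z : lett x (~~ y) z = px 2 (lett x y z).
Proof. by apply: val_inj; rewrite /= lettE pxE // lettE; case: x; case: y; case: z. Qed.
Lemma lett1 x y z : lett x y (~~ z) = px 1 (lett x y z).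
Proof. by apply: val_inj; rewrite /= lettE pxE // lettE; case: x; case: y; case: z. Qed.
Lemma lett6 x y z : lett (~~ x) (~~ y) z = px 6 (lett x y z).
Proof. by apply: val_inj; rewrite /= lettE pxE // lettE; case: x; case: y; case: z. Qed.
Lemma lettsg x y z : lett y x z = sg (lett x y z).
Proof. by apply: val_inj; rewrite /= lettE sgE lettE; case: x; case: y; case: z. Qed.
Lemma hb4l x y z : hb 4 (lett x y z) = x.
Proof. by rewrite /hb lettE; case: x; case: y; case: z. Qed.
Lemma hb2l x y z : hb 2 (lett x y z) = y.
Proof. by rewrite /hb lettE; case: x; case: y; case: z. Qed.
Lemma hb1l x y z : hb 1 (lett x y z) = z.
Proof. by rewrite /hb lettE; case: x; case: y; case: z. Qed.

Definition lcs (c : bool) : seq nat :=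
  if c then [:: 0; 1; 0; 1; 0; 1; 0; 1]%N else [:: 1; 0; 1; 0; 1; 0; 1; 0]%N.
Definition labs (a b : bool) : seq nat :=
  match a, b with
  | false, false => [:: 1; 1; 0; 0; 0; 0; 0; 0]%N
  | false, true  => [:: 0; 0; 1; 1; 0; 0; 0; 0]%N
  | true, false  => [:: 0; 0; 0; 0; 1; 1; 0; 0]%N
  | true, true   => [:: 0; 0; 0; 0; 0; 0; 1; 1]%N
  end.
Definition Lf (s : seq nat) (i : 'I_8) : rat := (nth 0%N s i)%:R.
Lemma LcE c i : Lc c 0 i = Lf (lcs c) i.
Proof. by case: c; rewrite mxE. Qed.
Lemma LabE a b i : Lab a b 0 i = Lf (labs a b) i.
Proof. by case: a; case: b; rewrite mxE. Qed.

Lemma Lf_from (p : 'I_8 -> 'I_8) (pn : nat -> nat) s t :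
  (forall i, nat_of_ord (p i) = pn i) ->
  all (fun i => nth 0%N s (pn i) == nth 0%N t i) i8 ->
  forall i, Lf s (p i) = Lf t i.
Proof. by move=> hp H i; rewrite /Lf hp (eqP (alln (fun i => nth 0%N s (pn i) == nth 0%N t i) H i)). Qed.

Lemma Lc4 c : forall i, Lf (lcs c) (px 4 i) = Lf (lcs c) i.
Proof. apply: (@Lf_from _ (fun i => Nat.lxor i 4)) => [i|]; [exact: pxE|by case: c; vm_compute]. Qed.
Lemma Lc2 c : forall i, Lf (lcs c) (px 2 i) = Lf (lcs c) i.
Proof. apply: (@Lf_from _ (fun i => Nat.lxor i 2)) => [i|]; [exact: pxE|by case: c; vm_compute]. Qed.
Lemma Lc1 c : forall i, Lf (lcs (~~ c)) (px 1 i) = Lf (lcs c) i.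
Proof. apply: (@Lf_from _ (fun i => Nat.lxor i 1)) => [i|]; [exact: pxE|by case: c; vm_compute]. Qed.
Lemma Lcsg c : forall i, Lf (lcs c) (sg i) = Lf (lcs c) i.
Proof. apply: (@Lf_from _ sgn) => [i|]; [exact: sgE|by case: c; vm_compute]. Qed.
Lemma Lab4 a b : forall i, Lf (labs a b) (px 4 i) = Lf (labs (~~ a) b) i.
Proof. apply: (@Lf_from _ (fun i => Nat.lxor i 4)) => [i|]; [exact: pxE|by case: a; case: b; vm_compute]. Qed.
Lemma Lab2 a b : forall i, Lf (labs a b) (px 2 i) = Lf (labs a (~~ b)) i.
Proof. apply: (@Lf_from _ (fun i => Nat.lxor i 2)) => [i|]; [exact: pxE|by case: a; case: b; vm_compute]. Qed.
Lemma Lab1 a b : forall i, Lf (labs a b) (px 1 i) = Lf (labs a b) i.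
Proof. apply: (@Lf_from _ (fun i => Nat.lxor i 1)) => [i|]; [exact: pxE|by case: a; case: b; vm_compute]. Qed.

Lemma Lf0_from m s : all (fun i => ~~ hbn m i ==> (nth 0%N s i == 0%N)) i8 ->
  forall i, ~~ hb m i -> Lf s i = 0.
Proof.
move=> H i h; have := alln (fun i => ~~ hbn m i ==> (nth 0%N s i == 0%N)) H i.
by rewrite /hb in h; rewrite /hbn h /= /Lf => /eqP ->.
Qed.
Lemma Lc1z : forall i, ~~ hb 1 i -> Lf (lcs true) i = 0.
Proof. apply: Lf0_from; by vm_compute. Qed.
Lemma Lab4z b : forall i, ~~ hb 4 i -> Lf (labs true b) i = 0.
Proof. apply: Lf0_from; by case: b; vm_compute. Qed.
Lemma Lab2z a : forall i, ~~ hb 2 i -> Lf (labs a true) i = 0.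
Proof. apply: Lf0_from; by case: a; vm_compute. Qed.

Lemma rowsum s k j :
  \sum_(i < 8) Lf s i * Amat k i j =
  (foldr (fun i acc => nth 0%N s i * a0n k i j + acc)%N 0%N i8)%:R / 4.
Proof.
have -> : (foldr (fun i acc => nth 0%N s i * a0n k i j + acc)%N 0%N i8) =
          (\sum_(i < 8) nth 0%N s i * a0n k i j)%N.
  by rewrite -(big_mkord xpredT (fun i => nth 0%N s i * a0n k i j)%N) /index_iota /= !big_cons big_nil.
rewrite natr_sum mulr_suml; apply: eq_bigr => i _.
by rewrite AmatE natrM mulrA.
Qed.

Lemma row6 c : forall k j : 'I_8,
  \sum_(i < 8) Lf (lcs c) i * Amat (px 6 k) i j = \sum_(i < 8) Lf (lcs c) i * Amat k i j.
Proof.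
move=> k j; rewrite !rowsum.
have H : forall k j : 'I_8, (foldr (fun i acc => nth 0%N (lcs c) i * a0n (Nat.lxor k 6) i j + acc)%N 0%N i8
   == foldr (fun i acc => nth 0%N (lcs c) i * a0n k i j + acc)%N 0%N i8).
  apply: (alln2 (fun k j => foldr (fun i acc => nth 0%N (lcs c) i * a0n (Nat.lxor k 6) i j + acc)%N 0%N i8
   == foldr (fun i acc => nth 0%N (lcs c) i * a0n k i j + acc)%N 0%N i8)).
  by case: c; vm_compute.
by rewrite pxE // (eqP (H k j)).
Qed.

Definition vec := 'I_8 -> rat.
Definition mv (k : 'I_8) (v : vec) : vec := fun i => \sum_(j < 8) Amat k i j * v j.
Definition mvf (ks : seq 'I_8) (v : vec) : vec := foldr mv v ks.
Definition e0f : vec := fun i => e0T i 0.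
Definition dotv (L v : vec) : rat := \sum_(j < 8) L j * v j.

Lemma mv_ext k (v w : vec) : (forall i, v i = w i) -> forall i, mv k v i = mv k w i.
Proof. by move=> H i; apply: eq_bigr => j _; rewrite H. Qed.
Lemma dot_ext (L L' v w : vec) : (forall i, L i = L' i) -> (forall i, v i = w i) -> dotv L v = dotv L' w.
Proof. by move=> H1 H2; apply: eq_bigr => j _; rewrite H1 H2. Qed.

Lemma prod_e0 ks i : ((\prod_(k <- ks) Amat k) *m e0T) i 0 = mvf ks e0f i.
Proof.
elim: ks i => [|k ks IH] i; first by rewrite big_nil mul1mx.
rewrite big_cons /=.
have -> : (Amat k * \prod_(j <- ks) Amat j) *m e0T = Amat k *m ((\prod_(j <- ks) Amat j) *m e0T).
  by rewrite mulmxA.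
rewrite mxE; apply: eq_bigr => j _; by rewrite IH.
Qed.

Lemma mv_perm (p : 'I_8 -> 'I_8) :
  (forall k i j, Amat (p k) i j = Amat k (p i) (p j)) -> involutive p ->
  forall k v i, mv (p k) (fun j => v (p j)) i = mv k v (p i).
Proof.
move=> Hp Hpp k v i; rewrite /mv.
under eq_bigr do rewrite Hp.
rewrite (reindex_inj (can_inj Hpp)) /=; apply: eq_bigr => j _; by rewrite Hpp.
Qed.

Lemma mvf_map (p : 'I_8 -> 'I_8) :
  (forall k i j, Amat (p k) i j = Amat k (p i) (p j)) -> involutive p ->
  forall ks (v v' : vec), (forall i, v' i = v (p i)) ->
  forall i, mvf (map p ks) v' i = mvf ks v (p i).
Proof.
move=> Hp Hpp; elim=> [|k ks IH] v v' Hv i /=; first exact: Hv.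
rewrite (@mv_ext _ _ _ (IH v v' Hv)).
exact: mv_perm.
Qed.

Lemma dot_perm (p : 'I_8 -> 'I_8) : involutive p ->
  forall (L v : vec), dotv L (fun j => v (p j)) = dotv (fun j => L (p j)) v.
Proof.
move=> Hpp L v; rewrite /dotv (reindex_inj (can_inj Hpp)) /=.
apply: eq_bigr => j _; by rewrite Hpp.
Qed.

Lemma mv_supp (hb' : 'I_8 -> bool) :
  (forall k i l, ~~ hb' k -> hb' i -> ~~ hb' l -> Amat k i l = 0) ->
  forall k (v : vec), ~~ hb' k -> (forall l, hb' l -> v l = 0) ->
  forall l, hb' l -> mv k v l = 0.
Proof.
move=> Hcl k v hk Hv l hl; rewrite /mv big1 // => j _.
case: (boolP (hb' j)) => hj; first by rewrite Hv // mulr0.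
by rewrite Hcl // mul0r.
Qed.

Lemma mvf_supp (hb' : 'I_8 -> bool) :
  (forall k i l, ~~ hb' k -> hb' i -> ~~ hb' l -> Amat k i l = 0) ->
  forall ks (v : vec), all (fun k => ~~ hb' k) ks -> (forall l, hb' l -> v l = 0) ->
  forall l, hb' l -> mvf ks v l = 0.
Proof.
move=> Hcl; elim=> [|k ks IH] v //= /andP [hk hks] Hv.
apply: mv_supp => //; exact: IH.
Qed.

Lemma mv_sym (p : 'I_8 -> 'I_8) (hb' : 'I_8 -> bool) :
  (forall k i l, hb' k -> ~~ hb' l -> Amat k (p i) l = Amat k i l) ->
  forall k (v : vec), hb' k -> (forall l, hb' l -> v l = 0) ->
  forall i, mv k v (p i) = mv k v i.
Proof.
move=> Hsy k v hk Hv i; apply: eq_bigr => j _.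
case: (boolP (hb' j)) => hj; first by rewrite Hv // !mulr0.
by rewrite Hsy.
Qed.

Lemma e0_supp m : forall l : 'I_8, hb m l -> e0f l = 0.
Proof.
move=> l; rewrite /e0f mxE; case: eqP => // h.
by rewrite /hb h div0n.
Qed.

Lemma dot_mv (L : vec) k v :
  dotv L (mv k v) = \sum_(j < 8) (\sum_(i < 8) L i * Amat k i j) * v j.
Proof.
rewrite /dotv /mv; under eq_bigr do rewrite mulr_sumr.
rewrite exchange_big; apply: eq_bigr => j _; rewrite mulr_suml.
by apply: eq_bigr => i _; rewrite mulrA.
Qed.

From mathcomp Require Import zify.

Definition lets_g n (x : nat) (G : nat -> bool -> 'I_8) : seq 'I_8 :=
  [seq G (n.-1 - i)%N (odd (x %/ 2 ^ (n.-1 - i))) | i <- iota 0 n].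

Lemma lets_gS n x G : lets_g n.+1 x G = G n (odd (x %/ 2 ^ n)) :: lets_g n x G.
Proof.
rewrite /lets_g /= subn0; congr (_ :: _).
have -> : iota 1 n = map (addn 1) (iota 0 n) by rewrite -iotaDl.
rewrite -map_comp; apply/eq_in_map => i; rewrite mem_iota => /andP [_ hi] /=.
by have -> : (n - (1 + i) = n.-1 - i)%N by lia.
Qed.

Lemma oddmod n m x : (m < n)%N -> odd ((x %% 2 ^ n) %/ 2 ^ m) = odd (x %/ 2 ^ m).
Proof.
move=> hm.
have e : (2 ^ n = 2 ^ (n - m) * 2 ^ m)%N by rewrite -expnD subnK // ltnW.
rewrite [in RHS](divn_eq x (2 ^ n)) [in X in (_ * X + _)%N]e mulnA divnMDl ?expn_gt0 //.
rewrite oddD oddM oddX.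
have -> : (n - m == 0)%N = false by apply/negbTE; rewrite subn_eq0 -ltnNge.
by rewrite andbF.
Qed.

Lemma lets_g_mod n x G : lets_g n x G = lets_g n (x %% 2 ^ n) G.
Proof.
apply/eq_in_map => i; rewrite mem_iota => /andP [_ hi].
rewrite oddmod //; lia.
Qed.

Lemma lets_g_zero (hb' : 'I_8 -> bool) n x G :
  (forall m, ~~ hb' (G m false)) -> (x %% 2 ^ n = 0)%N ->
  all (fun k => ~~ hb' k) (lets_g n x G).
Proof.
move=> HG hx; rewrite lets_g_mod hx; apply/allP => k /mapP [i _ ->].
by rewrite div0n.
Qed.

Lemma A1 x n : (x %% 2 ^ n.+1 = odd (x %/ 2 ^ n) * 2 ^ n + x %% 2 ^ n)%N.
Proof.
have hP : (0 < 2 ^ n)%N by rewrite expn_gt0.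
rewrite {1}(divn_eq x (2 ^ n)) {1}(divn_eq (x %/ 2 ^ n) 2) modn2 expnS.
have -> : ((x %/ 2 ^ n %/ 2 * 2 + odd (x %/ 2 ^ n)) * 2 ^ n + x %% 2 ^ n =
          x %/ 2 ^ n %/ 2 * (2 * 2 ^ n) + (odd (x %/ 2 ^ n) * 2 ^ n + x %% 2 ^ n))%N.
  by rewrite mulnDl -mulnA addnA.
rewrite modnMDl modn_small //.
have := ltn_pmod x hP; case: (odd _); lia.
Qed.

Lemma core P (b b' : bool) r r' : (0 < P)%N -> (r < P)%N -> (r' < P)%N ->
  ((r + r') %% P = 0)%N -> ((b * P + r + (b' * P + r')) %% (2 * P) = 0)%N ->
  ((r = 0)%N -> b' = b) /\ ((r <> 0)%N -> b' = ~~ b).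
Proof.
move=> hP hr hr' h1 h2.
have [c hc] : exists c, (r + r' = c * P)%N.
  by exists ((r + r') %/ P)%N; rewrite {1}(divn_eq (r + r')%N P) h1 addn0.
have [d hd] : exists d, (b * P + r + (b' * P + r') = d * (2 * P))%N.
  by exists ((b * P + r + (b' * P + r')) %/ (2 * P))%N; rewrite {1}(divn_eq (b * P + r + (b' * P + r'))%N (2 * P)%N) h2 addn0.
have hc2 : (c < 2)%N.
  by rewrite -(ltn_pmul2r hP) -hc; lia.
have e : (b + b' + c = 2 * d)%N.
  apply/eqP; rewrite -(eqn_pmul2r hP); apply/eqP.
  rewrite mulnDl mulnDl -hc; lia.
clear h2 hd.
have [c0|c1] : c = 0%N \/ c = 1%N by lia.
  rewrite c0 mul0n in hc; rewrite c0 in e.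
  split=> hr0; last by lia.
  by move: e; case: b; case: b' => /=; lia.
rewrite c1 mul1n in hc; rewrite c1 in e.
split=> hr0; first by lia.
by move: e; case: b; case: b' => /=; lia.
Qed.

Lemma neg_main (p : 'I_8 -> 'I_8) (hb' : 'I_8 -> bool) (G : nat -> bool -> 'I_8) :
  (forall k i j, Amat (p k) i j = Amat k (p i) (p j)) -> involutive p ->
  (forall k i l, ~~ hb' k -> hb' i -> ~~ hb' l -> Amat k i l = 0) ->
  (forall k i l, hb' k -> ~~ hb' l -> Amat k (p i) l = Amat k i l) ->
  (forall l, hb' l -> e0f l = 0) ->
  (forall m b, G m (~~ b) = p (G m b)) -> (forall m b, hb' (G m b) = b) ->
  forall n x x', ((x + x') %% 2 ^ n = 0)%N -> (x %% 2 ^ n != 0)%N ->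
  forall i, mvf (lets_g n x' G) e0f i = mvf (lets_g n x G) e0f (p i).
Proof.
move=> Hp Hpp Hcl Hsy He HG1 HG2.
elim=> [|n IH] x x' Hs Hx i; first by rewrite expn0 modn1 in Hx.
rewrite !lets_gS /=.
have hP : (0 < 2 ^ n)%N by rewrite expn_gt0.
have Hs' : ((x + x') %% 2 ^ n = 0)%N.
  by rewrite -(modn_dvdm _ (dvdn_exp2l 2 (leqnSn n))) Hs mod0n.
have Hr : ((x %% 2 ^ n + x' %% 2 ^ n) %% 2 ^ n = 0)%N by rewrite modnDm.
have Ht : ((odd (x %/ 2 ^ n) * 2 ^ n + x %% 2 ^ n + (odd (x' %/ 2 ^ n) * 2 ^ n + x' %% 2 ^ n))
            %% (2 * 2 ^ n) = 0)%N.
  by rewrite -!A1 -expnS modnDm.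
have [C1 C2] := @core _ _ _ _ _ hP (ltn_pmod x hP) (ltn_pmod x' hP) Hr Ht.
have Hx1 := Hx; rewrite A1 in Hx1.
case: (eqVneq (x %% 2 ^ n)%N 0%N) => hr.
- have hr' : (x' %% 2 ^ n = 0)%N.
    by move: Hr; rewrite hr add0n modn_mod.
  have bx : odd (x %/ 2 ^ n) by move: Hx1; rewrite hr addn0; case: (odd _).
  rewrite (C1 hr) bx.
  have -> : lets_g n x' G = lets_g n x G by rewrite (lets_g_mod n x') (lets_g_mod n x) hr hr'.
  set v := mvf (lets_g n x G) e0f.
  have sv : forall l, hb' l -> v l = 0.
    have HGz : forall m, ~~ hb' (G m false) by move=> m; rewrite HG2.
    move=> l hl; exact: (@mvf_supp hb' Hcl _ _ (@lets_g_zero hb' n x G HGz hr) He l hl).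
  by rewrite (@mv_sym p hb' Hsy) // HG2.
- rewrite (C2 (fun h => negP hr (introT eqP h))) HG1.
  rewrite (@mv_ext _ _ _ (IH x x' Hs' hr)).
  exact: (@mv_perm p Hp Hpp).
Qed.

Definition lets3 n x y z :=
  lets_g n x (fun m b => lett b (odd (y %/ 2 ^ m)) (odd (z %/ 2 ^ m))).

Lemma AprodE n (al be ga : 'I_(2 ^ n)) j :
  (Aprod al be ga *m e0T) j 0 = mvf (lets3 n al be ga) e0f j.
Proof.
rewrite /Aprod -(big_mkord xpredT (fun i => Amat (omega al be ga i))) /index_iota subn0.
rewrite -(big_map (fun i => omega al be ga i) xpredT Amat).
exact: prod_e0.
Qed.

Lemma cadpE n c (al be ga : 'I_(2 ^ n)) :
  cadp c al be ga = dotv (Lf (lcs c)) (mvf (lets3 n al be ga) e0f).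
Proof.
rewrite /cadp.
have -> : Lc c *m Aprod al be ga *m e0T = Lc c *m (Aprod al be ga *m e0T) by rewrite mulmxA.
rewrite mxE; apply: eq_bigr => j _; by rewrite LcE AprodE.
Qed.

Lemma padpE n a b (al be ga : 'I_(2 ^ n)) :
  padp a b al be ga = dotv (Lf (labs a b)) (mvf (lets3 n al be ga) e0f).
Proof.
rewrite /padp.
have -> : Lab a b *m Aprod al be ga *m e0T = Lab a b *m (Aprod al be ga *m e0T) by rewrite mulmxA.
rewrite mxE; apply: eq_bigr => j _; by rewrite LabE AprodE.
Qed.

Lemma neg_dot (p : 'I_8 -> 'I_8) (hb' : 'I_8 -> bool) (G : nat -> bool -> 'I_8) :
  (forall k i j, Amat (p k) i j = Amat k (p i) (p j)) -> involutive p ->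
  (forall k i l, ~~ hb' k -> hb' i -> ~~ hb' l -> Amat k i l = 0) ->
  (forall k i l, hb' k -> ~~ hb' l -> Amat k (p i) l = Amat k i l) ->
  (forall l, hb' l -> e0f l = 0) ->
  (forall m b, G m (~~ b) = p (G m b)) -> (forall m b, hb' (G m b) = b) ->
  forall (L L' : vec) n x x', ((x + x') %% 2 ^ n = 0)%N -> (x %% 2 ^ n != 0)%N ->
  (forall i, L (p i) = L' i) ->
  dotv L (mvf (lets_g n x' G) e0f) = dotv L' (mvf (lets_g n x G) e0f).
Proof.
move=> Hp Hpp Hcl Hsy He HG1 HG2 L L' n x x' Hs Hx HL.
rewrite (@dot_ext L L _ (fun i => mvf (lets_g n x G) e0f (p i)) (fun=> erefl)
           (@neg_main p hb' G Hp Hpp Hcl Hsy He HG1 HG2 n x x' Hs Hx)).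
rewrite (@dot_perm p Hpp).
exact: dot_ext.
Qed.

Lemma zero_dot (hb' : 'I_8 -> bool) (G : nat -> bool -> 'I_8) :
  (forall k i l, ~~ hb' k -> hb' i -> ~~ hb' l -> Amat k i l = 0) ->
  (forall l, hb' l -> e0f l = 0) ->
  (forall m, ~~ hb' (G m false)) ->
  forall (L : vec) n, (forall i, ~~ hb' i -> L i = 0) ->
  dotv L (mvf (lets_g n 0 G) e0f) = 0.
Proof.
move=> Hcl He HG L n HL; rewrite /dotv big1 // => j _.
case: (boolP (hb' j)) => hj; last by rewrite HL // mul0r.
by rewrite (@mvf_supp hb' Hcl _ _ (@lets_g_zero hb' n 0 G HG (mod0n _)) He j hj) mulr0.
Qed.

Lemma zopp_sum n (x : 'I_(2 ^ n)) : ((x + zopp x) %% 2 ^ n = 0)%N.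
Proof. by rewrite /= modnDmr subnKC ?modnn // ltnW. Qed.

Lemma nz n (x : 'I_(2 ^ n)) : x != zero n -> (x %% 2 ^ n != 0)%N.
Proof.
rewrite modn_small //; apply: contra => /eqP h; apply/eqP/val_inj.
by rewrite /= h mod0n.
Qed.

Lemma zopp0 n (x : 'I_(2 ^ n)) : ~~ (x != zero n) -> zopp x = x.
Proof.
rewrite negbK => /eqP ->; apply: val_inj => /=; by rewrite !mod0n subn0 modnn.
Qed.

Lemma negx (L L' : vec) n (x x' : nat) y z :
  ((x + x') %% 2 ^ n = 0)%N -> (x %% 2 ^ n != 0)%N -> (forall i, L (px 4 i) = L' i) ->
  dotv L (mvf (lets3 n x' y z) e0f) = dotv L' (mvf (lets3 n x y z) e0f).
Proof.
exact: (@neg_dot (px 4) (hb 4) (fun m b => lett b (odd (y %/ 2 ^ m)) (odd (z %/ 2 ^ m))) perm4 inv4 clos4 sym4 (@e0_supp 4) (fun m b => lett4 _ _ _) (fun m b => hb4l _ _ _)).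
Qed.

Lemma negy (L L' : vec) n x (y y' : nat) z :
  ((y + y') %% 2 ^ n = 0)%N -> (y %% 2 ^ n != 0)%N -> (forall i, L (px 2 i) = L' i) ->
  dotv L (mvf (lets3 n x y' z) e0f) = dotv L' (mvf (lets3 n x y z) e0f).
Proof.
exact: (@neg_dot (px 2) (hb 2) (fun m b => lett (odd (x %/ 2 ^ m)) b (odd (z %/ 2 ^ m)))
  perm2 inv2 clos2 sym2 (@e0_supp 2) (fun m b => lett2 _ _ _) (fun m b => hb2l _ _ _)).
Qed.

Lemma negz (L L' : vec) n x y (z z' : nat) :
  ((z + z') %% 2 ^ n = 0)%N -> (z %% 2 ^ n != 0)%N -> (forall i, L (px 1 i) = L' i) ->
  dotv L (mvf (lets3 n x y z') e0f) = dotv L' (mvf (lets3 n x y z) e0f).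
Proof.
exact: (@neg_dot (px 1) (hb 1) (fun m b => lett (odd (x %/ 2 ^ m)) (odd (y %/ 2 ^ m)) b)
  perm1 inv1 clos1 sym1 (@e0_supp 1) (fun m b => lett1 _ _ _) (fun m b => hb1l _ _ _)).
Qed.

Lemma zx (L : vec) n y z : (forall i, ~~ hb 4 i -> L i = 0) ->
  dotv L (mvf (lets3 n 0 y z) e0f) = 0.
Proof.
exact: (@zero_dot (hb 4) (fun m b => lett b (odd (y %/ 2 ^ m)) (odd (z %/ 2 ^ m)))
  clos4 (@e0_supp 4) (fun m => negbT (hb4l _ _ _))).
Qed.
Lemma zy (L : vec) n x z : (forall i, ~~ hb 2 i -> L i = 0) ->
  dotv L (mvf (lets3 n x 0 z) e0f) = 0.
Proof.
exact: (@zero_dot (hb 2) (fun m b => lett (odd (x %/ 2 ^ m)) b (odd (z %/ 2 ^ m)))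
  clos2 (@e0_supp 2) (fun m => negbT (hb2l _ _ _))).
Qed.
Lemma zz (L : vec) n x y : (forall i, ~~ hb 1 i -> L i = 0) ->
  dotv L (mvf (lets3 n x y 0) e0f) = 0.
Proof.
exact: (@zero_dot (hb 1) (fun m b => lett (odd (x %/ 2 ^ m)) (odd (y %/ 2 ^ m)) b)
  clos1 (@e0_supp 1) (fun m => negbT (hb1l _ _ _))).
Qed.

Lemma lets3S n x y z : lets3 n.+1 x y z =
  lett (odd (x %/ 2 ^ n)) (odd (y %/ 2 ^ n)) (odd (z %/ 2 ^ n)) :: lets3 n x y z.
Proof. exact: lets_gS. Qed.

Lemma lets3_mod n x y z : lets3 n x y z = lets3 n (x %% 2 ^ n) (y %% 2 ^ n) z.
Proof.
apply/eq_in_map => i; rewrite mem_iota => /andP [_ hi] /=.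
rewrite !oddmod //; lia.
Qed.

Lemma lets3_swap n x y z : lets3 n y x z = map sg (lets3 n x y z).
Proof. rewrite /lets3 /lets_g -map_comp; apply: eq_map => i /=; exact: lettsg. Qed.

Lemma e0sg i : e0f i = e0f (sg i).
Proof.
rewrite /e0f !mxE sgE.
have := alln (fun i => (i == 0)%N == (sgn i == 0)%N) isT i.
by move/eqP ->.
Qed.

Lemma swap_dot (L : vec) n x y z : (forall i, L (sg i) = L i) ->
  dotv L (mvf (lets3 n y x z) e0f) = dotv L (mvf (lets3 n x y z) e0f).
Proof.
move=> HL; rewrite lets3_swap.
rewrite (@dot_ext L L _ (fun i => mvf (lets3 n x y z) e0f (sg i)) (fun=> erefl)
   (@mvf_map sg permsg invsg _ _ _ e0sg)).
rewrite (@dot_perm sg invsg); exact: dot_ext.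
Qed.

Lemma msb_bit m x : odd ((x + 2 ^ m %% 2 ^ m.+1) %% 2 ^ m.+1 %/ 2 ^ m) = ~~ odd (x %/ 2 ^ m).
Proof.
have h : (2 ^ m < 2 ^ m.+1)%N by rewrite ltn_exp2l.
rewrite (modn_small h) oddmod //.
by rewrite divnDr // divnn expn_gt0 /= oddD addbT.
Qed.

Lemma msb_low m x : ((x + 2 ^ m %% 2 ^ m.+1) %% 2 ^ m.+1 %% 2 ^ m = x %% 2 ^ m)%N.
Proof.
have h : (2 ^ m < 2 ^ m.+1)%N by rewrite ltn_exp2l.
rewrite (modn_small h).
by rewrite (modn_dvdm _ (dvdn_exp2l 2 (leqnSn m))) modnDr.
Qed.

Lemma msb_dot c n (al be ga : 'I_(2 ^ n)) :
  cadp c al be ga = cadp c (zadd al (zmod n (2 ^ n.-1))) (zadd be (zmod n (2 ^ n.-1))) ga.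
Proof.
rewrite !cadpE; case: n al be ga => [|m] al be ga; first by [].
rewrite !lets3S /= (lets3_mod m (_ %% _)%N) !msb_low -lets3_mod !msb_bit lett6.
rewrite !dot_mv; apply: eq_bigr => j _; by rewrite row6.
Qed.

Lemma zeroE n : nat_of_ord (zero n) = 0%N.
Proof. exact: mod0n. Qed.

Theorem theorem4 (n : nat) (al be ga : 'I_(2 ^ n)) (a b c : bool) :
  (* (1) *)
  (cadp c al be ga = cadp c be al ga /\
   cadp c be al ga =
     cadp c (zadd al (zmod n (2 ^ n.-1))) (zadd be (zmod n (2 ^ n.-1))) ga) /\
  (* (2) *)
  (cadp c al be ga = cadp c (zopp al) be ga /\
   cadp c (zopp al) be ga = cadp c al (zopp be) ga) /\
  (* (3) *)
  (ga != zero n -> cadp c al be ga = cadp (~~ c) al be (zopp ga)) /\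
  (* (4) *)
  padp a b al be ga = padp a b al be (zopp ga) /\
  (* (5) *)
  (al != zero n -> padp a b (zopp al) be ga = padp (~~ a) b al be ga) /\
  (* (6) *)
  (be != zero n -> padp a b al (zopp be) ga = padp a (~~ b) al be ga) /\
  (* (7) *)
  (padp true b (zero n) be ga = padp a true al (zero n) ga /\
   padp a true al (zero n) ga = cadp true al be (zero n) /\
   cadp true al be (zero n) = 0).
Proof.
have H1 : cadp c al be ga = cadp c be al ga.
  by rewrite !cadpE; symmetry; apply: swap_dot; exact: Lcsg.
have H2 : cadp c al be ga = cadp c (zopp al) be ga.
  case: (boolP (al != zero n)) => h; last by rewrite zopp0.
  rewrite !cadpE; symmetry; exact: (@negx _ _ _ _ _ _ _ (zopp_sum _ al) (@nz _ _ h) (Lc4 c)).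
have H2' : cadp c al be ga = cadp c al (zopp be) ga.
  case: (boolP (be != zero n)) => h; last by rewrite zopp0.
  rewrite !cadpE; symmetry; exact: (@negy _ _ _ _ _ _ _ (zopp_sum _ be) (@nz _ _ h) (Lc2 c)).
have P1 : padp true b (zero n) be ga = 0.
  by rewrite padpE zeroE; apply: zx; exact: Lab4z.
have P2 : padp a true al (zero n) ga = 0.
  by rewrite padpE zeroE; apply: zy; exact: Lab2z.
have P3 : cadp true al be (zero n) = 0.
  by rewrite cadpE zeroE; apply: zz; exact: Lc1z.
split; [split => //; rewrite -H1; exact: msb_dot|].
split; [split => //; by rewrite -H2 -H2'|].
split.
  move=> h; rewrite !cadpE; symmetry; exact: (@negz _ _ _ _ _ _ _ (zopp_sum _ ga) (@nz _ _ h) (Lc1 c)).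
split.
  case: (boolP (ga != zero n)) => h; last by rewrite zopp0.
  rewrite !padpE; symmetry; exact: (@negz _ _ _ _ _ _ _ (zopp_sum _ ga) (@nz _ _ h) (Lab1 a b)).
split.
  move=> h; rewrite !padpE; exact: (@negx _ _ _ _ _ _ _ (zopp_sum _ al) (@nz _ _ h) (Lab4 a b)).
split.
  move=> h; rewrite !padpE; exact: (@negy _ _ _ _ _ _ _ (zopp_sum _ be) (@nz _ _ h) (Lab2 a b)).
by rewrite P1 P2 P3.
Qed.
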